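(* Let $a>1$. Then, as $t\to-\infty$, $$f(t,a)\sim\left(-\frac{\pi t}{2}\right)^{1/2}a^{-t}\,\mathrm{erfi}\!\left[-(1+\ln a)\sqrt{-t/2}\right]\exp\!\left(\frac{t(1+\ln a)^{2}}{2}\right),$$ where $f(t,a)=t\int_0^1(ax)^{-tx}\,dx$. In particular $|f(t,a)|$ grows exponentially as $t\to-\infty$.
   Context: For real $a>0$ and real $t$, $f(t,a)=t\int_0^1 (ax)^{-tx}\,dx$, where $(ax)^{-tx}=\exp(-tx\ln(ax))$ for $x\in(0,1]$. $\mathrm{erfi}(x)=\frac{2}{\sqrt\pi}\int_0^x e^{z^2}\,dz$ is the imaginary error function. The notation $g\sim h$ means $g/h\to1$. *)

(* Defs.v *)
From Stdlib Require Import Reals.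
From Coquelicot Require Import Coquelicot.
Open Scope R_scope.

(* (a x)^(-t x) := exp(-t x ln(a x)) for x in (0,1]; the value at x = 0 is
   irrelevant for the Riemann integral. *)
Definition integrand (t a x : R) : R := exp (- t * x * ln (a * x)).

Definition fta (t a : R) : R := t * RInt (fun x => integrand t a x) 0 1.

Definition erfi (x : R) : R := 2 / sqrt PI * RInt (fun z => exp (z ^ 2)) 0 x.

Definition approx (t a : R) : R :=
  sqrt (- PI * t / 2) * Rpower a (- t)
  * erfi (- (1 + ln a) * sqrt (- t / 2))
  * exp (t * (1 + ln a) ^ 2 / 2).

(* Main.v *)
Require Import Defs.
From Stdlib Require Import Reals.
From Coquelicot Require Import Coquelicot.
From Stdlib Require Import Lra Psatz.
Open Scope R_scope.
Definition hf (s b x : R) := exp (- s * (b * (1 - x) - (1 - x) ^ 2)).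
Definition lf (s b x : R) := exp (- s * b * (1 - x)).

Ltac fixexp := repeat match goal with |- context [exp ?u] => match goal with |- context [exp ?v] =>
   tryif constr_eq u v then fail else (replace u with v by ring) end end.
Ltac cont := intros; apply (@ex_derive_continuous R_AbsRing R_NormedModule); auto_derive; auto.
Ltac exri := apply (@ex_RInt_continuous R_CompleteNormedModule); cont.

Lemma hf_ex s b : ex_RInt (hf s b) 0 1.
Proof. apply (@ex_RInt_continuous R_CompleteNormedModule); intros; apply (@ex_derive_continuous R_AbsRing R_NormedModule); unfold hf; auto_derive; auto. Qed.
Lemma lf_ex s b : ex_RInt (lf s b) 0 1.
Proof. apply (@ex_RInt_continuous R_CompleteNormedModule); intros; apply (@ex_derive_continuous R_AbsRing R_NormedModule); unfold lf; auto_derive; auto. Qed.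

Lemma lf_int s b : 0 < s -> 0 < b -> RInt (lf s b) 0 1 = (1 - exp (- s * b)) / (s * b).
Proof.
  intros hs hb.
  assert (H := @is_RInt_derive R_CompleteNormedModule (fun x => exp (- s * b * (1 - x)) / (s * b)) (lf s b) 0 1).
  rewrite (is_RInt_unique _ _ _ _ (H ltac:(intros x _; unfold lf; auto_derive; auto; fixexp; field; nra)
     ltac:(intros x _; apply (@ex_derive_continuous R_AbsRing R_NormedModule); unfold lf; auto_derive; auto))).
  unfold minus, plus, opp; simpl. replace (1-1) with 0 by ring. replace (1-0) with 1 by ring.
  rewrite Rmult_0_r, exp_0, Rmult_1_r. field. nra.
Qed.

Lemma exp_le' x y : x <= y -> exp x <= exp y.
Proof. intros [h|h]; [left; apply exp_increasing; auto| subst; lra]. Qed.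

Lemma lf_bound s b : 0 < s -> 1 < b -> s * b / (1 + s * b) <= s * b * RInt (lf s b) 0 1.
Proof.
  intros hs hb. assert (hsb : 0 < s * b) by nra.
  rewrite lf_int by lra.
  assert (1 + s * b <= exp (s * b)) by apply exp_ineq1_le.
  assert (exp (- s * b) = / exp (s * b)) by (rewrite <- exp_Ropp; f_equal; ring).
  replace (s * b * ((1 - exp (- s * b)) / (s * b))) with (1 - exp (- s * b)) by (field; lra).
  rewrite H0.
  assert (/ exp (s * b) <= / (1 + s * b)) by (apply Rinv_le_contravar; lra).
  replace (s * b / (1 + s * b)) with (1 - / (1 + s * b)) by (field; lra). lra.
Qed.

Lemma K_bounds s b : 0 < s -> 1 < b ->
  s * b / (1 + s * b) <= s * b * RInt (hf s b) 0 1 <= 1 + 2 / (s * (b - 1) ^ 2).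
Proof.
  intros hs hb. set (c := b - 1).
  assert (hc : 0 < c) by (unfold c; lra).
  assert (hsb : 0 < s * b) by nra.
  split.
  - assert (RInt (lf s b) 0 1 <= RInt (hf s b) 0 1).
    { apply RInt_le; [lra| apply lf_ex | apply hf_ex |].
      intros x hx. unfold lf, hf. apply exp_le'. assert (0 <= s*(1-x)^2) by (apply Rmult_le_pos; [lra| apply pow2_ge_0]). nra. }
    rewrite lf_int in H by lra.
    assert (1 + s * b <= exp (s * b)) by apply exp_ineq1_le.
    assert (exp (- s * b) = / exp (s * b)) by (rewrite <- exp_Ropp; f_equal; ring).
    assert (E : s * b * RInt (hf s b) 0 1 >= 1 - exp (- s * b)).
    { apply Rmult_le_compat_l with (r := s*b) in H; [|lra].
      replace (s * b * ((1 - exp (- s * b)) / (s * b))) with (1 - exp (- s * b)) in H by (field; lra). lra. }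
    rewrite H1 in E.
    assert (/ exp (s * b) <= / (1 + s * b)) by (apply Rinv_le_contravar; lra).
    replace (s * b / (1 + s * b)) with (1 - / (1 + s * b)) by (field; lra). lra.
  - set (K := RInt (hf s b) 0 1).
    set (J := RInt (fun x => (1 - x) * hf s b x) 0 1).
    assert (exJ : ex_RInt (fun x => (1 - x) * hf s b x) 0 1) by (unfold hf; exri).
    assert (Id1 : RInt (fun x => s * (b - 2 * (1 - x)) * hf s b x) 0 1 = 1 - exp (- s * c)).
    { assert (H := @is_RInt_derive R_CompleteNormedModule (hf s b) (fun x => s * (b - 2 * (1 - x)) * hf s b x) 0 1).
      rewrite (is_RInt_unique _ _ _ _ (H ltac:(intros x _; unfold hf; auto_derive; auto; fixexp; field)
        ltac:(unfold hf; cont))).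
      unfold minus, plus, opp, hf, c; simpl.
      match goal with |- exp ?A + - exp ?B = _ => replace A with 0 by ring; replace B with (- s * (b - 1)) by ring end.
      rewrite exp_0; ring. }
    assert (Id2 : RInt (fun x => s * (b - 2 * (1 - x)) * hf s b x) 0 1 = s * b * K - 2 * s * J).
    { apply is_RInt_unique.
      apply (@is_RInt_ext R_NormedModule (fun x => minus (scal (s*b) (hf s b x)) (scal (2*s) ((1 - x) * hf s b x)))).
      { intros x _. unfold minus, plus, opp, scal; simpl. unfold mult; simpl. ring. }
      replace (s * b * K - 2 * s * J) with (minus (scal (s*b) K) (scal (2*s) J)).
      2:{ unfold minus, plus, opp, scal; simpl. unfold mult; simpl. ring. }
      apply (@is_RInt_minus R_NormedModule); apply (@is_RInt_scal R_NormedModule);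
        apply (@RInt_correct R_CompleteNormedModule); [apply hf_ex | exact exJ]. }
    assert (HJ : J <= RInt (fun x => (1 - x) * exp (- s * c * (1 - x))) 0 1).
    { apply RInt_le; [lra | exact exJ | exri |].
      intros x hx. apply Rmult_le_compat_l; [lra|]. unfold hf. apply exp_le'.
      unfold c. assert (0 <= s*(1-x)*x) by (apply Rmult_le_pos; [apply Rmult_le_pos|]; lra). nra. }
    assert (HG : RInt (fun x => (1 - x) * exp (- s * c * (1 - x))) 0 1 <= 1 / (s * c) ^ 2).
    { assert (H := @is_RInt_derive R_CompleteNormedModule
         (fun x => exp (- s * c * (1 - x)) * ((1 - x) / (s * c) + 1 / (s * c) ^ 2))
         (fun x => (1 - x) * exp (- s * c * (1 - x))) 0 1).
      rewrite (is_RInt_unique _ _ _ _ (H ltac:(intros x _; auto_derive; auto; fixexp; field; nra)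
        ltac:(cont))).
      unfold minus, plus, opp; simpl.
      replace (1 - 1) with 0 by ring. rewrite Rmult_0_r, exp_0.
      assert (hX : 0 < s * c) by nra.
      assert (0 <= exp (- s * c * (1 - 0)) * ((1 - 0) / (s * c) + 1 / (s * c * (s * c * 1)))).
      { apply Rmult_le_pos; [left; apply exp_pos|].
        apply Rplus_le_le_0_compat; left; apply Rdiv_lt_0_compat; nra. }
      replace (0 / (s * c)) with 0 by (field; lra). lra. }
    assert (0 < exp (- s * c)) by apply exp_pos.
    assert (s * b * K <= 1 + 2 * s * (1 / (s * c) ^ 2)) by nra.
    replace (2 / (s * c ^ 2)) with (2 * s * (1 / (s * c) ^ 2)) by (field; nra). lra.
Qed.

Lemma ln_le_m1 z : 0 < z -> ln z <= z - 1.
Proof. intros h. assert (H := exp_ineq1_le (ln z)). rewrite exp_ln in H; lra. Qed.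

Lemma ln_ge_1m z : 0 < z -> 1 - / z <= ln z.
Proof. intros h. assert (H := ln_le_m1 (/ z) ltac:(apply Rinv_0_lt_compat; lra)).
  rewrite ln_Rinv in H; lra. Qed.

Lemma ln_nonpos z : z <= 0 -> ln z = 0.
Proof. intros h. unfold ln. destruct (Rlt_dec 0 z) as [r|r]. exfalso; lra. reflexivity. Qed.

Lemma xlnx_bound x : 0 < x <= 1 -> Rabs (x * ln x) <= 2 * sqrt x.
Proof.
  intros hx. set (r := sqrt x).
  assert (hr : 0 < r) by (apply sqrt_lt_R0; lra).
  assert (hrr : r * r = x) by (apply sqrt_sqrt; lra).
  assert (hl : ln x = 2 * ln r) by (rewrite <- hrr, ln_mult by lra; ring).
  assert (h1 := ln_ge_1m r hr). assert (h2 := ln_le_m1 x ltac:(lra)).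
  assert (r * (r * (1 - / r)) = r * r - r) by (field; lra).
  assert (r <= 1) by nra.
  rewrite Rabs_left1 by nra. rewrite hl, <- hrr. nra.
Qed.

Lemma g_cont0 a : 0 < a -> continuous (fun x => x * ln (a * x)) 0.
Proof.
  intros ha. apply continuity_pt_filterlim.
  intros eps heps. set (L := Rabs (ln a)). assert (0 <= L) by apply Rabs_pos.
  set (e := eps / (L + 2)). assert (he : 0 < e) by (apply Rdiv_lt_0_compat; lra).
  exists (Rmin 1 (e * e)). split. { apply Rmin_pos; nra. }
  intros x [_ hx]. simpl in *. unfold Rdist, R_dist in *. rewrite Rmult_0_l, !Rminus_0_r in *.
  assert (hm1 := Rmin_l 1 (e*e)). assert (hm2 := Rmin_r 1 (e*e)).
  destruct (Rle_lt_dec x 0) as [h0|h0].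
  { rewrite ln_nonpos by nra. rewrite Rmult_0_r, Rabs_R0. lra. }
  rewrite Rabs_right in hx by lra.
  rewrite ln_mult by lra. rewrite Rmult_plus_distr_l.
  assert (hb := xlnx_bound x ltac:(lra)).
  set (r := sqrt x) in *.
  assert (hr : 0 < r) by (apply sqrt_lt_R0; lra).
  assert (hrr : r * r = x) by (apply sqrt_sqrt; lra).
  assert (r < e) by nra.
  assert (r <= 1) by nra.
  assert (x <= r) by nra. assert (Rabs (x * ln a) <= r * L) by (rewrite Rabs_mult, (Rabs_right x) by lra; apply Rmult_le_compat_r; lra).
  assert (e * (L + 2) = eps) by (unfold e; field; lra).
  eapply Rle_lt_trans. apply Rabs_triang. nra.
Qed.

Lemma dawson y : RInt (fun z => exp (z ^ 2)) 0 (- y) = - y * exp (y ^ 2) * RInt (hf (y ^ 2) 2) 0 1.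
Proof.
  assert (H := RInt_comp_lin (fun z => exp (z ^ 2)) (- y) 0 0 1 ltac:(exri)).
  replace (- y * 0 + 0) with 0 in H by ring. replace (- y * 1 + 0) with (- y) in H by ring.
  rewrite <- H.
  rewrite (RInt_scal (V := R_CompleteNormedModule)) by exri.
  unfold scal; simpl; unfold mult; simpl. rewrite Rmult_assoc. f_equal.
  rewrite <- (RInt_scal (V := R_CompleteNormedModule) (hf (y ^ 2) 2)) by (unfold hf; exri).
  apply RInt_ext. intros x _. unfold scal; simpl; unfold mult; simpl. unfold hf.
  rewrite <- exp_plus. f_equal. ring.
Qed.

Lemma integ_ex t a : 0 < a -> ex_RInt (integrand t a) 0 1.
Proof.
  intros ha. apply (@ex_RInt_continuous R_CompleteNormedModule).
  intros z hz. rewrite Rmin_left, Rmax_right in hz by lra.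
  destruct (Req_dec z 0) as [->|hz0].
  - unfold integrand.
    apply (continuous_comp (fun x => - t * x * ln (a * x)) exp).
    + apply (continuous_ext (fun x => (- t) * (x * ln (a * x)))). { intros; simpl; ring. }
      apply (@continuous_mult R_UniformSpace R_AbsRing). apply continuous_const. apply g_cont0; lra.
    + apply (@ex_derive_continuous R_AbsRing R_NormedModule); auto_derive; auto.
  - apply (@ex_derive_continuous R_AbsRing R_NormedModule); unfold integrand; auto_derive.
    repeat split; auto. nra.
Qed.

Lemma integ_bounds t a x : 1 < a -> t < 0 -> 0 < x < 1 ->
  exp (- t * ln a) * lf (- t) (1 + ln a) x <= integrand t a x <=
  exp (- t * ln a) * hf (- t) (1 + ln a) x.
Proof.
  intros ha ht hx. unfold lf, hf, integrand. rewrite <- !exp_plus.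
  rewrite ln_mult by lra.
  assert (h1 := ln_ge_1m x ltac:(lra)). assert (h2 := ln_le_m1 x ltac:(lra)).
  assert (x * ln x >= x - 1).
  { assert (x * (1 - / x) = x - 1) by (field; lra). nra. }
  assert (x * ln x <= x * (x - 1)) by nra.
  split; apply exp_le'; nra.
Qed.

Lemma key a t : 1 < a -> t <= -2 -> exists P Q,
  fta t a = - exp (- t * ln a) * P / (1 + ln a) /\
  approx t a = - exp (- t * ln a) * Q / (1 + ln a) /\
  1 - 1 / (- t) <= P <= 1 + (2 / (ln a) ^ 2) / (- t) /\
  1 - 1 / (- t) <= Q <= 1 + 4 / (- t).
Proof.
  intros ha ht. set (s := - t). set (L := ln a). set (b := 1 + L).
  assert (hL : 0 < L) by (unfold L; rewrite <- ln_1; apply ln_increasing; lra).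
  assert (hs : 2 <= s) by (unfold s; lra).
  set (A := exp (- t * L)). assert (hA : 0 < A) by apply exp_pos.
  set (I := RInt (integrand t a) 0 1).
  set (y := b * sqrt (s / 2)).
  assert (hsq : sqrt (s / 2) * sqrt (s / 2) = s / 2) by (apply sqrt_sqrt; lra).
  assert (hy2 : y ^ 2 = b ^ 2 * s / 2) by (unfold y; replace ((b * sqrt (s / 2)) ^ 2) with (b ^ 2 * (sqrt (s / 2) * sqrt (s / 2))) by ring; rewrite hsq; field).
  set (K2 := RInt (hf (y ^ 2) 2) 0 1).
  exists (s * b * I / A), (y ^ 2 * 2 * K2).
  split; [|split; [|split]].
  - unfold fta, I, A, s, b. change (fun x => integrand t a x) with (integrand t a). assert (0 < exp (- t * L)) by apply exp_pos. field. split; lra.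
  - unfold approx, erfi.
    unfold Rpower. fold L.
    replace (- (1 + L) * sqrt (- t / 2)) with (- y) by (unfold y, b, s; ring).
    rewrite dawson. fold K2.
    assert (E : exp (t * (1 + L) ^ 2 / 2) = / exp (y ^ 2)).
    { rewrite <- exp_Ropp. f_equal. rewrite hy2. unfold b, s. field. }
    rewrite E. replace (exp (s * L)) with (exp (- t * L)) by reflexivity.
    replace (- PI * t / 2) with (PI * (s / 2)) by (unfold s; field).
    rewrite sqrt_mult by (try apply Rlt_le, PI_RGT_0; lra).
    rewrite hy2. unfold y.
    assert (0 < sqrt PI) by (apply sqrt_lt_R0, PI_RGT_0).
    assert (0 < exp (b ^ 2 * s / 2)) by apply exp_pos.
    assert (0 < b) by (unfold b; lra).
    set (e := exp (b ^ 2 * s / 2)) in *. set (r := sqrt (s / 2)) in *.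
    clearbody e r. clearbody s. assert (hs2 : s = 2 * (r * r)) by lra. rewrite hs2.
    field. lra.
  - assert (hb : 1 < b) by (unfold b; lra).
    assert (hs0 : 0 < s) by lra.
    assert (I1 : A * RInt (lf s b) 0 1 <= I).
    { assert (Es : RInt (fun x => A * lf s b x) 0 1 = A * RInt (lf s b) 0 1) by exact (RInt_scal (V:=R_CompleteNormedModule) (lf s b) 0 1 A (lf_ex s b)).
      rewrite <- Es.
      apply RInt_le; [lra| unfold lf; exri | apply integ_ex; lra |].
      intros x hx. apply (integ_bounds t a x ha); lra. }
    assert (I2 : I <= A * RInt (hf s b) 0 1).
    { assert (Es : RInt (fun x => A * hf s b x) 0 1 = A * RInt (hf s b) 0 1) by exact (RInt_scal (V:=R_CompleteNormedModule) (hf s b) 0 1 A (hf_ex s b)).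
      rewrite <- Es.
      apply RInt_le; [lra| apply integ_ex; lra | unfold hf; exri |].
      intros x hx. apply (integ_bounds t a x ha); lra. }
    assert (B1 := lf_bound s b hs0 hb). assert (B2 := K_bounds s b hs0 hb).
    replace (b - 1) with L in B2 by (unfold b; ring).
    assert (hsb : 0 < s * b) by nra.
    assert (E1 : s * b * I / A = s * b * (I / A)) by (generalize (I : R); intros; field; lra).
    assert (EA : A * (I / A) = I) by (generalize (I : R); intros; field; lra).
    assert (I1' : RInt (lf s b) 0 1 <= I / A).
    { apply (Rmult_le_reg_l A); [lra|]. rewrite EA. lra. }
    assert (I2' : I / A <= RInt (hf s b) 0 1).
    { apply (Rmult_le_reg_l A); [lra|]. rewrite EA. lra. }
    rewrite E1. split.
    + assert (1 - 1 / s <= s * b / (1 + s * b)).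
      { replace (s * b / (1 + s * b)) with (1 - 1 / (1 + s * b)) by (field; lra).
        assert (1 / (1 + s * b) <= 1 / s) by (apply Rmult_le_compat_l; [lra| apply Rinv_le_contravar; nra]).
        lra. }
      nra.
    + replace (2 / L ^ 2 / s) with (2 / (s * L ^ 2)) by (field; split; lra). nra.
  - assert (hb : 1 < b) by (unfold b; lra).
    assert (hs0 : 0 < s) by lra.
    assert (hy : s / 2 <= y ^ 2) by (rewrite hy2; assert (1 <= b ^ 2) by nra; nra).
    assert (hy0 : 0 < y ^ 2) by lra.
    assert (B := K_bounds (y ^ 2) 2 hy0 ltac:(lra)). fold K2 in B.
    replace (2 - 1) with 1 in B by ring. rewrite pow1, Rmult_1_r in B.
    split.
    + assert (1 - 1 / s <= y ^ 2 * 2 / (1 + y ^ 2 * 2)).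
      { replace (y ^ 2 * 2 / (1 + y ^ 2 * 2)) with (1 - 1 / (1 + y ^ 2 * 2)) by (field; lra).
        assert (1 / (1 + y ^ 2 * 2) <= 1 / s) by (apply Rmult_le_compat_l; [lra| apply Rinv_le_contravar; nra]).
        lra. }
      lra.
    + assert (2 / y ^ 2 <= 4 / s).
      { replace (4 / s) with (2 / (s / 2)) by (field; lra).
        apply Rmult_le_compat_l; [lra| apply Rinv_le_contravar; lra]. }
      lra.
Qed.

Lemma ratio_bound P Q s M : 2 <= s -> 0 <= M -> 1 - 1 / s <= P <= 1 + M / s ->
  1 - 1 / s <= Q <= 1 + 4 / s -> Rabs (P / Q - 1) <= 2 * (M + 5) / s.
Proof.
  intros hs hM hP hQ.
  assert (h1 : 1 / s <= 1 / 2) by (apply Rmult_le_compat_l; [lra| apply Rinv_le_contravar; lra]).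
  assert (hQ0 : 1 / 2 <= Q) by lra.
  replace (P / Q - 1) with ((P - Q) / Q) by (field; lra).
  assert (Rabs (P - Q) <= (M + 5) / s).
  { replace ((M + 5) / s) with (M / s + 4 / s + 1 / s) by (field; lra).
    assert (0 <= M / s) by (apply Rmult_le_pos; [lra| left; apply Rinv_0_lt_compat; lra]).
    assert (0 <= 4 / s) by (apply Rmult_le_pos; [lra| left; apply Rinv_0_lt_compat; lra]).
    apply Rabs_le; lra. }
  rewrite Rabs_div by lra. rewrite (Rabs_right Q) by lra.
  apply (Rmult_le_reg_r Q); [lra|].
  replace (Rabs (P - Q) / Q * Q) with (Rabs (P - Q)) by (field; lra).
  assert (0 <= (M + 5) / s) by (apply Rmult_le_pos; [lra| left; apply Rinv_0_lt_compat; lra]).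
  replace (2 * (M + 5) / s) with (2 * ((M + 5) / s)) by (field; lra). nra.
Qed.

Theorem mainTheorem6 (a : R) (ha : 1 < a) :
  is_lim (fun t => fta t a / approx t a) m_infty 1
  /\ exists c C : R, 0 < c /\ 0 < C /\
       exists T : R, forall t : R, t < T -> C * exp (- c * t) <= Rabs (fta t a).
Proof.
  assert (hL : 0 < ln a) by (rewrite <- ln_1; apply ln_increasing; lra).
  set (M0 := 2 / ln a ^ 2).
  assert (hM : 0 <= M0) by (unfold M0; apply Rmult_le_pos; [lra| left; apply Rinv_0_lt_compat, pow_lt; lra]).
  split.
  - apply is_lim_spec. intros eps. simpl.
    assert (he := cond_pos eps).
    exists (- (2 + 2 * (M0 + 5) / eps)).
    intros t ht.
    assert (h5 : 0 <= 2 * (M0 + 5) / eps) by (apply Rmult_le_pos; [lra| left; apply Rinv_0_lt_compat; lra]).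
    destruct (key a t ha ltac:(lra)) as (P & Q & eP & eQ & bP & bQ).
    assert (hA : 0 < exp (- t * ln a)) by apply exp_pos.
    assert (hQ : 0 < Q).
    { assert (1 / (- t) <= 1 / 2) by (apply Rmult_le_compat_l; [lra| apply Rinv_le_contravar; lra]). lra. }
    replace (fta t a / approx t a) with (P / Q) by (rewrite eP, eQ; field; lra).
    eapply Rle_lt_trans. apply (ratio_bound P Q (- t) M0); auto; lra.
    apply (Rmult_lt_reg_r (- t / eps)). { apply Rdiv_lt_0_compat; lra. }
    replace (2 * (M0 + 5) / - t * (- t / eps)) with (2 * (M0 + 5) / eps) by (field; lra).
    replace (eps * (- t / eps)) with (- t) by (field; lra). lra.
  - exists (ln a), (1 / (2 * (1 + ln a))). split; [lra|]. split.
    { apply Rdiv_lt_0_compat; lra. }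
    exists (-2). intros t ht.
    destruct (key a t ha ltac:(lra)) as (P & Q & eP & eQ & bP & bQ).
    assert (hA : 0 < exp (- t * ln a)) by apply exp_pos.
    replace (- ln a * t) with (- t * ln a) by ring.
    assert (1 / (- t) <= 1 / 2) by (apply Rmult_le_compat_l; [lra| apply Rinv_le_contravar; lra]).
    rewrite eP. rewrite Rabs_left1.
    2:{ replace (- exp (- t * ln a) * P / (1 + ln a)) with (- (exp (- t * ln a) * P / (1 + ln a))) by (field; lra).
        apply Ropp_le_0_compat||idtac. assert (0 <= exp (- t * ln a) * P / (1 + ln a)).
        { apply Rmult_le_pos; [apply Rmult_le_pos; lra| left; apply Rinv_0_lt_compat; lra]. } lra. }
    replace (- (- exp (- t * ln a) * P / (1 + ln a))) with (exp (- t * ln a) * P / (1 + ln a)) by (field; lra).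
    replace (1 / (2 * (1 + ln a)) * exp (- t * ln a)) with (exp (- t * ln a) * (1 / 2) / (1 + ln a)) by (field; lra).
    apply Rmult_le_compat_r. { left; apply Rinv_0_lt_compat; lra. }
    apply Rmult_le_compat_l; lra.
Qed.
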